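(* Let $n$ be a positive integer, let $\alpha$ be a real number with $\frac{1}{2} \le \alpha < 1$, and let $\beta = 1-\alpha$. Suppose that $\frac{t_1}{A_1}, \frac{t_2}{A_2}, \dots, \frac{t_{n+1}}{A_{n+1}}$ are rational numbers, each of which is an $(n+3)$-bit underapproximation to $\beta$. Then the rational number \[ 1+\frac{t_1}{A_1}+\frac{t_1t_2}{A_1A_2}+\cdots+\prod_{i=1}^{n+1}\frac{t_i}{A_i} \] is an $n$-bit underapproximation to $\frac{1}{\alpha}$.
   Context: For a real number $\alpha$ and a positive integer $k$, a rational number $\alpha'$ is called a $k$-bit underapproximation to $\alpha$ if $0 \le \alpha - \alpha' \le \frac{1}{2^k}$. *)

(* Defs.v *)
From Stdlib Require Import Reals QArith Qreals.
Open Scope R_scope.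

Definition underapprox (k : nat) (a' : Q) (alpha : R) : Prop :=
  0 <= alpha - Q2R a' <= / 2 ^ k.

Fixpoint prodQ (q : nat -> Q) (j : nat) : Q :=
  match j with
  | O => 1%Q
  | S j' => (prodQ q j' * q j)%Q
  end.

Fixpoint partial_prod_sum (q : nat -> Q) (m : nat) : Q :=
  match m with
  | O => 1%Q
  | S m' => (partial_prod_sum q m' + prodQ q m)%Q
  end.

(* Main.v *)
Require Import Defs.
From Stdlib Require Import Reals QArith Qreals Lra Lia Psatz.
Open Scope R_scope.

Section S.
Variable x : nat -> R.
Fixpoint prodR (j l : nat) : R :=
  match l with O => 1 | S l' => prodR j l' * x (j + l')%nat end.
Fixpoint sumR (j m : nat) : R :=
  match m with O => 1 | S m' => sumR j m' + prodR j m end.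

Lemma prodR_S j l : prodR j (S l) = x j * prodR (S j) l.
Proof.
  induction l as [|l IH].
  - simpl. rewrite Nat.add_0_r. ring.
  - change (prodR j (S (S l))) with (prodR j (S l) * x (j + S l)%nat).
    rewrite IH. change (prodR (S j) (S l)) with (prodR (S j) l * x (S j + l)%nat).
    replace (j + S l)%nat with (S j + l)%nat by lia. ring.
Qed.

Lemma sumR_S j m : sumR j (S m) = 1 + x j * sumR (S j) m.
Proof.
  induction m as [|m IH].
  - simpl. rewrite Nat.add_0_r. ring.
  - change (sumR j (S (S m))) with (sumR j (S m) + prodR j (S (S m))).
    rewrite IH, prodR_S.
    change (sumR (S j) (S m)) with (sumR (S j) m + prodR (S j) (S m)). ring.
Qed.

Lemma main_bound (alpha a eps : R) :
  / 2 <= alpha < 1 -> a = / alpha -> 0 <= eps <= / 4 ->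
  forall m j, (forall i, (j <= i < j + m)%nat -> 1 - alpha - eps <= x i <= 1 - alpha) ->
  0 <= sumR j m <= a /\ a - sumR j m <= / 2 ^ m + 4 * eps.
Proof.
  intros Ha Hdef He.
  assert (Haa : alpha * a = 1) by (subst; field; lra).
  assert (Ha1 : 1 <= a <= 2).
  { subst a. split.
    - rewrite <- Rinv_1. apply Rinv_le_contravar; lra.
    - replace 2 with (/ / 2) by field. apply Rinv_le_contravar; lra. }
  induction m as [|m IH]; intros j Hx.
  - simpl. lra.
  - rewrite sumR_S.
    destruct (IH (S j)) as [[H0 H1] H2].
    { intros i Hi. apply Hx. lia. }
    destruct (Hx j) as [Hx1 Hx2]; [lia|].
    set (r := sumR (S j) m) in *. set (b := 1 - alpha) in *.
    assert (Hba : b * a = a - 1) by (unfold b; nra).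
    assert (F1 : (x j - (b - eps)) * r >= 0) by nra.
    assert (F2 : (b - x j) * r >= 0) by nra.
    assert (F3 : b * (a - r) >= 0) by (unfold b; nra).
    assert (F4 : (/2 - b) * (a - r) >= 0) by (unfold b; nra).
    assert (F5 : (eps - (b - x j)) * r >= 0) by nra.
    assert (F6 : eps * (a - r) >= 0) by nra.
    assert (Hp : / 2 ^ S m = / 2 ^ m * / 2).
    { simpl. rewrite Rinv_mult. ring. }
    rewrite Hp. nra.
Qed.
End S.

Lemma prodQ_R q l : Q2R (prodQ q l) = prodR (fun i => Q2R (q i)) 1 l.
Proof.
  induction l as [|l IH]; simpl.
  - unfold Q2R; simpl; field.
  - rewrite Q2R_mult, IH. reflexivity.
Qed.

Lemma sumQ_R q m : Q2R (partial_prod_sum q m) = sumR (fun i => Q2R (q i)) 1 m.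
Proof.
  induction m as [|m IH].
  - unfold Q2R; simpl; field.
  - change (partial_prod_sum q (S m)) with (partial_prod_sum q m + prodQ q (S m))%Q.
    rewrite Q2R_plus, IH, prodQ_R. reflexivity.
Qed.

Theorem lemma3p1 (n : nat) (alpha : R) (q : nat -> Q) :
  (1 <= n)%nat ->
  / 2 <= alpha < 1 ->
  (forall i : nat, (1 <= i <= n + 1)%nat -> underapprox (n + 3) (q i) (1 - alpha)) ->
  underapprox n (partial_prod_sum q (n + 1)) (/ alpha).
Proof.
  intros Hn Ha Hq.
  unfold underapprox. rewrite sumQ_R.
  assert (Hp : 0 < 2 ^ n) by (apply pow_lt; lra).
  assert (E3 : 2 ^ (n + 3) = 8 * 2 ^ n) by (rewrite pow_add; simpl; ring).
  assert (E1 : 2 ^ (n + 1) = 2 * 2 ^ n) by (rewrite pow_add; simpl; ring).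
  assert (He : 0 <= / 2 ^ (n + 3) <= / 4).
  { rewrite E3. split.
    - apply Rlt_le, Rinv_0_lt_compat; lra.
    - apply Rinv_le_contravar; try lra.
      assert (1 <= 2 ^ n) by (apply pow_R1_Rle; lra). lra. }
  destruct (main_bound (fun i => Q2R (q i)) alpha (/ alpha) (/ 2 ^ (n + 3)) Ha eq_refl He
              (n + 1) 1) as [[H0 H1] H2].
  { intros i Hi. destruct (Hq i) as [A B]; [lia|]. split; lra. }
  rewrite E1, E3 in H2.
  assert (Hk : / (2 * 2 ^ n) + 4 * / (8 * 2 ^ n) = / 2 ^ n) by (field; lra).
  lra.
Qed.
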